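(* Let $S\subset[m]$ and $w\in\Lambda_S$, and let $JF(w)=\big(\frac{\partial F_i}{\partial v_j}(w)\big)_{i,j}$ be the $m\times m$ Jacobian of $F$ at $w$ (computed from the formula for $F$). Then all eigenvalues of $JF(w)$ other than the numbers $\frac{\partial L}{\partial v_i}(w)$, $i\notin S$, are real and nonpositive; more precisely, the spectrum of $JF(w)$ is $\{\frac{\partial L}{\partial v_i}(w): i\notin S\}$ together with the spectrum of a matrix that is self-adjoint for a suitable inner product and negative semidefinite. In particular $JF(w)$ has a real positive eigenvalue if and only if there is $i\in[m]$ with $w_i=0$ and $\frac{\partial L}{\partial v_i}(w)>0$.
   Context: $H=(V,E)$ is a finite hypergraph with $V=[m]$, $|E|=N\ge1$, hyperedges nonempty subsets of $[m]$, each vertex in at least one hyperedge. For $v\in\mathbb R^m$ and $I\in E$, $v_I=\sum_{i\in I}v_i$. Fix $0<c<1/N$, $\Delta=\{x\in\mathbb R^m: x_i\ge0,\ \sum_i x_i=1,\ x_I\ge c\ \forall I\in E\}$. $L(v)=-\sum_i v_i+\frac1N\sum_{I\in E}\log v_I$ and $F_i(v)=-v_i+\frac1N\sum_{I\ni i}\frac{v_i}{v_I}=v_i\frac{\partial L}{\partial v_i}(v)$. For $S\subset[m]$, $\Delta_S=\{v\in\Delta: v_i=0\iff i\notin S\}$ and $\Lambda_S=\{v\in\Delta_S:\frac{\partial L}{\partial v_i}(v)=0\ \forall i\in S\}$. *)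

(* Defs.v *)
From HB Require Import structures.
From mathcomp Require Import all_boot all_order all_algebra.
From mathcomp Require Import all_classical all_reals all_analysis.
From mathcomp Require Import complex.
Set Implicit Arguments. Unset Strict Implicit. Unset Printing Implicit Defensive.
Import Order.TTheory GRing.Theory Num.Theory.
Import numFieldNormedType.Exports.
Local Open Scope ring_scope.

Section HG.
Variables (R : realType) (m : nat).

Definition vsum (v : 'rV[R]_m) (I : {set 'I_m}) : R := \sum_(i in I) v 0 i.

Definition ej (j : 'I_m) : 'rV[R]_m := delta_mx 0 j.

Definition partial (f : 'rV[R]_m -> R) (j : 'I_m) (x : 'rV[R]_m) : R :=
  'D_(ej j) f x.

Variable E : {set {set 'I_m}}.

Definition hypergraph : Prop :=
  (0 < #|E|)%N /\ (forall I, I \in E -> (0 < #|I|)%N) /\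
  (forall i : 'I_m, exists2 I, I \in E & i \in I).

Definition Nr : R := (#|E|)%:R.

Definition Lf (v : 'rV[R]_m) : R :=
  - (\sum_i v 0 i) + Nr^-1 * \sum_(I in E) ln (vsum v I).

Definition Ff (i : 'I_m) (v : 'rV[R]_m) : R :=
  - v 0 i + Nr^-1 * \sum_(I in E | i \in I) (v 0 i / vsum v I).

Definition JF (w : 'rV[R]_m) : 'M[R]_m :=
  \matrix_(i, j) partial (Ff i) j w.

Variable c : R.

Definition Delta (x : 'rV[R]_m) : Prop :=
  (forall i, 0 <= x 0 i) /\ \sum_i x 0 i = 1 /\
  (forall I, I \in E -> c <= vsum x I).

Definition Delta_S (S : {set 'I_m}) (v : 'rV[R]_m) : Prop :=
  Delta v /\ (forall i, v 0 i = 0 <-> i \notin S).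

Definition Lambda_S (S : {set 'I_m}) (v : 'rV[R]_m) : Prop :=
  Delta_S S v /\ (forall i, i \in S -> partial Lf i v = 0).

End HG.

Definition ceigen (R : realType) (n : nat) (A : 'M[R]_n) (z : R[i]) : bool :=
  eigenvalue (map_mx (real_complex R) A) z.

(* Main.v *)
Require Import Defs.
From HB Require Import structures.
From mathcomp Require Import all_boot all_order all_algebra.
From mathcomp Require Import all_classical all_reals all_analysis.
From mathcomp Require Import complex.
From mathcomp Require Import ring lra.
Import Order.TTheory GRing.Theory Num.Theory.
Import numFieldNormedType.Exports.
Local Open Scope ring_scope.

Section C.
Variable R : rcfType.
Local Notation Re := (@complex.Re R).
Local Notation Im := (@complex.Im R).
Lemma Re_sum (I : finType) (F : I -> R[i]) : Re (\sum_i F i) = \sum_i Re (F i).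
Proof. by apply: (big_morph _ (fun x y => _)) => //; case=> a b [c d]. Qed.
Lemma Im_sum (I : finType) (F : I -> R[i]) : Im (\sum_i F i) = \sum_i Im (F i).
Proof. by apply: (big_morph _ (fun x y => _)) => //; case=> a b [c d]. Qed.
Lemma ReMr (x : R[i]) r : Re (x * r%:C%C) = Re x * r.
Proof. by case: x => a b /=; rewrite mulr0 subr0. Qed.
Lemma ImMr (x : R[i]) r : Im (x * r%:C%C) = Im x * r.
Proof. by case: x => a b /=; rewrite mulr0 add0r. Qed.
Lemma ReM (x y : R[i]) : Re (x * y) = Re x * Re y - Im x * Im y.
Proof. by case: x => a b; case: y => c d. Qed.
Lemma ImM (x y : R[i]) : Im (x * y) = Re x * Im y + Im x * Re y.
Proof. by case: x => a b; case: y => c d. Qed.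

Lemma eigenvalue_tr (F : fieldType) n (A : 'M[F]_n) a : eigenvalue A^T a = eigenvalue A a.
Proof.
rewrite !eigenvalue_root_char /char_poly; congr (root _ a).
rewrite -det_tr /char_poly_mx linearB /= tr_scalar_mx map_trmx.
by congr (\det (_ - _)); apply/matrixP => i j; rewrite !mxE.
Qed.

Lemma spec_real k (A P : 'M[R]_k)
 (hPd : forall x : 'cV_k, x != 0 -> 0 < (x^T *m P *m x) 0 0)
 (hsa : forall x y : 'cV_k, (A *m x)^T *m P *m y = x^T *m P *m (A *m y))
 (hnsd : forall x : 'cV_k, (x^T *m P *m (A *m x)) 0 0 <= 0)
 z : eigenvalue (map_mx (real_complex R) A) z -> Im z = 0 /\ Re z <= 0.
Proof.
rewrite -eigenvalue_tr => /eigenvalueP [v hv vn0].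
pose p : 'cV[R]_k := \col_a Re (v 0 a).
pose q : 'cV[R]_k := \col_a Im (v 0 a).
have hc a : \sum_b v 0 b * (A a b)%:C%C = z * v 0 a.
  by move/rowP: hv => /(_ a); rewrite !mxE => <-; apply: eq_bigr => b _; rewrite !mxE.
have Ap : A *m p = Re z *: p - Im z *: q.
  apply/matrixP => a j; have := congr1 Re (hc a); rewrite Re_sum ReM !mxE => <-.
  by apply: eq_bigr => b _; rewrite ReMr !mxE mulrC.
have Aq : A *m q = Im z *: p + Re z *: q.
  apply/matrixP => a j; have := congr1 Im (hc a); rewrite Im_sum ImM !mxE addrC => <-.
  by apply: eq_bigr => b _; rewrite ImMr !mxE mulrC.
pose B (x y : 'cV[R]_k) : R := (x^T *m P *m y) 0 0.
have BDr x y1 y2 a b : B x (a *: y1 + b *: y2) = a * B x y1 + b * B x y2.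
  by rewrite /B mulmxDr -!scalemxAr !mxE.
have BDl x1 x2 y a b : B (a *: x1 + b *: x2) y = a * B x1 y + b * B x2 y.
  by rewrite /B linearD !linearZ /= !mulmxDl -!scalemxAl !mxE.
have Bge0 x : 0 <= B x x.
  have [->|xn0] := eqVneq x 0; last exact/ltW/hPd.
  by rewrite /B mulmx0 mxE.
have pq0 : 0 < B p p + B q q.
  have [p0|pn0] := eqVneq p 0; last by apply: (lt_le_trans (hPd _ pn0)); rewrite lerDl.
  have [q0|qn0] := eqVneq q 0; last by apply: (lt_le_trans (hPd _ qn0)); rewrite lerDr.
  move/eqP: vn0; case; apply/rowP => a.
  move/matrixP: p0 => /(_ a 0); move/matrixP: q0 => /(_ a 0); rewrite !mxE.
  by case: (v 0 a) => x y /= -> ->.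
have hs := hsa p q.
move/matrixP: hs => /(_ 0 0).
rewrite Ap Aq.
rewrite -scaleNr => e1.
change (B (complex.Re z *: p + - complex.Im z *: q) q = B p (complex.Im z *: p + complex.Re z *: q)) in e1.
rewrite BDl BDr in e1.
have him : complex.Im z = 0.
  have e2 : complex.Im z * (B p p + B q q) = 0.
    rewrite mulrDr; move: e1; set a := B p q; set b := B p p; set c := B q q.
    by move=> e1; rewrite -[LHS]addr0 -(subrr (complex.Re z * a)); move: e1; rewrite mulNr => e1; lra.
  by move/eqP: e2; rewrite mulf_eq0 (gt_eqF pq0) orbF => /eqP.
split=> //.
have h1 : B p (A *m p) <= 0 := hnsd p.
have h2 : B q (A *m q) <= 0 := hnsd q.
rewrite Ap -scaleNr BDr him oppr0 mul0r addr0 in h1.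
rewrite Aq BDr him mul0r add0r in h2.
set a := B p p in h1 pq0; set b := B q q in h2 pq0.
nra.
Qed.

Section Core.
Variables (m : nat) (g w : 'I_m -> R) (M : 'I_m -> 'I_m -> R) (S : {set 'I_m}).
Hypotheses (hS : forall i, i \in S -> 0 < w i) (hN : forall i, i \notin S -> w i = 0)
  (hg : forall i, i \in S -> g i = 0) (hMs : forall i j, M i j = M j i)
  (hMn : forall k (f : 'I_k -> 'I_m) (x : 'I_k -> R),
      \sum_a \sum_b x a * M (f a) (f b) * x b <= 0).

Definition Jm : 'M[R]_m := \matrix_(i, j) ((i == j)%:R * g i + w i * M i j).
Definition fS (a : 'I_#|S|) : 'I_m := enum_val a.
Definition Am : 'M[R]_#|S| := \matrix_(a, b) (M (fS a) (fS b) * w (fS b)).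
Definition Pm : 'M[R]_#|S| := diag_mx (\row_a w (fS a)).

Lemma fS_in a : fS a \in S. Proof. exact: enum_valP. Qed.

Lemma sumS (V : nmodType) (F : 'I_m -> V) : (forall i, i \notin S -> F i = 0) ->
  \sum_i F i = \sum_a F (fS a).
Proof.
move=> F0; rewrite (bigID (mem S)) /= [X in _ + X]big1 ?addr0; last by move=> i /F0.
exact: big_enum_val.
Qed.

Lemma Pm_tr : Pm^T = Pm. Proof. exact: tr_diag_mx. Qed.

Lemma Pm_form (x y : 'cV[R]_#|S|) : (x^T *m Pm *m y) 0 0 = \sum_a x a 0 * w (fS a) * y a 0.
Proof. by rewrite /Pm mul_mx_diag !mxE; apply: eq_bigr => a _; rewrite !mxE. Qed.

Lemma Pm_pd (x : 'cV[R]_#|S|) : x != 0 -> 0 < (x^T *m Pm *m x) 0 0.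
Proof.
move=> xn0; rewrite Pm_form.
have [a xa] : exists a, x a 0 != 0.
  apply/existsP; move: xn0; apply: contraR; rewrite negb_exists => /forallP h.
  apply/eqP/matrixP => a b; rewrite (ord1 b) mxE; apply/eqP; move: (h a); by rewrite negbK.
rewrite (bigD1 a) //=.
have h1 : 0 < x a 0 * w (fS a) * x a 0.
  by rewrite mulrC mulrA mulr_gt0 // ?hS ?fS_in // -expr2 lt_def sqrf_eq0 xa sqr_ge0.
have h2 : 0 <= \sum_(b | b != a) x b 0 * w (fS b) * x b 0.
  by apply: sumr_ge0 => b _; rewrite mulrC mulrA mulr_ge0 ?sqr_ge0 // ltW // hS // fS_in.
lra.
Qed.

Lemma Am_sa_mx : Am^T *m Pm = Pm *m Am.
Proof.
rewrite /Pm mul_mx_diag mul_diag_mx; apply/matrixP => a b; rewrite !mxE hMs; lra.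
Qed.

Lemma Am_sa (x y : 'cV[R]_#|S|) : (Am *m x)^T *m Pm *m y = x^T *m Pm *m (Am *m y).
Proof. by rewrite trmx_mul -(mulmxA x^T Am^T Pm) Am_sa_mx !mulmxA. Qed.

Lemma Am_nsd (x : 'cV[R]_#|S|) : (x^T *m Pm *m (Am *m x)) 0 0 <= 0.
Proof.
rewrite mulmxA -[x^T *m Pm *m Am]mulmxA /Pm mul_diag_mx.
pose xx a := x a 0 * w (fS a).
have := hMn _ fS xx; apply: le_trans; rewrite le_eqVlt; apply/orP; left; apply/eqP.
rewrite mxE [RHS]exchange_big; apply: eq_bigr => b _; rewrite !mxE mulr_suml; apply: eq_bigr => a _.
rewrite !mxE /xx; ring.
Qed.

Local Notation toC := (real_complex R).

Lemma JmE i j : Jm i j = (i == j)%:R * g i + w i * M i j.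
Proof. by rewrite mxE. Qed.

Lemma eig_fwd z : eigenvalue (map_mx toC Jm) z ->
  (exists2 i, i \notin S & z = toC (g i)) \/ eigenvalue (map_mx toC Am) z.
Proof.
case/eigenvalueP => x hx xn0.
have he j : \sum_i x 0 i * toC ((i == j)%:R * g i + w i * M i j) = z * x 0 j.
  by move/rowP: hx => /(_ j); rewrite !mxE => <-; apply: eq_bigr => i _; rewrite !mxE.
pose u : 'rV[R[i]]_#|S| := \row_a (x 0 (fS a) * toC (w (fS a))).
have [u0|un0] := eqVneq u 0.
  left.
  have xS i : i \in S -> x 0 i = 0.
    move=> Hi; move/rowP: u0 => /(_ (enum_rank_in Hi i)); rewrite !mxE /fS enum_rankK_in //.
    move/eqP; rewrite mulf_eq0 fmorph_eq0 (gt_eqF (hS _ Hi)) orbF => /eqP //.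
  have xw i : x 0 i * toC (w i) = 0.
    by case: (boolP (i \in S)) => Hi; [rewrite xS // mul0r | rewrite hN // rmorph0 mulr0].
  have [j xj] : exists j, x 0 j != 0.
    apply/existsP; move: xn0; apply: contraR; rewrite negb_exists => /forallP h.
    apply/eqP/rowP => a; rewrite mxE; apply/eqP; move: (h a); by rewrite negbK.
  have jS : j \notin S by apply: contra xj => /xS ->.
  exists j => //.
  have := he j; rewrite (eq_bigr (fun i => x 0 i * toC ((i == j)%:R * g i))); last first.
    move=> i _; rewrite rmorphD mulrDr [X in _ + X](_ : _ = 0) ?addr0 //.
    by rewrite rmorphM mulrA xw mul0r.
  rewrite (bigD1 j) //= big1 ?addr0; last first.
    by move=> i /negbTE ne; rewrite ne mul0r rmorph0 mulr0.
  rewrite eqxx mul1r mulrC => e; apply: (mulIf xj); by rewrite e.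
right; apply/eigenvalueP; exists u => //; apply/rowP => b; rewrite !mxE.
have := he (fS b).
rewrite (eq_bigr (fun i => x 0 i * toC (w i * M i (fS b)))); last first.
  move=> i _; congr (_ * toC _); case: eqP => [->|_]; first by rewrite hg ?fS_in // mulr0 add0r.
  by rewrite mul0r add0r.
rewrite (@sumS _ (fun i => x 0 i * toC (w i * M i (fS b)))); last first.
  by move=> i /hN ->; rewrite mul0r rmorph0 mulr0.
move=> e.
transitivity ((\sum_a x 0 (fS a) * toC (w (fS a) * M (fS a) (fS b))) * toC (w (fS b))).
  rewrite mulr_suml; apply: eq_bigr => a _; rewrite !mxE !rmorphM /=; ring.
by rewrite e mulrA.
Qed.

Lemma eig_bwd1 j : j \notin S -> eigenvalue (map_mx toC Jm) (toC (g j)).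
Proof.
move=> jS; apply/eigenvalueP; exists (delta_mx 0 j).
  rewrite -rowE; apply/rowP => b; rewrite !mxE hN // mul0r addr0 rmorphM /= mulrC.
  by rewrite rmorph_nat eq_sym.
apply/eqP => /rowP/(_ j); rewrite !mxE !eqxx /= => /eqP; by rewrite oner_eq0.
Qed.

Lemma eig_bwd2 z : eigenvalue (map_mx toC Am) z -> eigenvalue (map_mx toC Jm) z.
Proof.
rewrite -eigenvalue_tr => /eigenvalueP [v hv vn0].
have hc a : \sum_b v 0 b * toC (M (fS a) (fS b) * w (fS b)) = z * v 0 a.
  by move/rowP: hv => /(_ a); rewrite !mxE => <-; apply: eq_bigr => b _; rewrite !mxE.
pose y : 'rV[R[i]]_m := \row_i \sum_(b | fS b == i) v 0 b * toC (w i).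
have yS a : y 0 (fS a) = v 0 a * toC (w (fS a)).
  rewrite mxE (big_pred1 a) // => b /=; exact: (inj_eq enum_val_inj).
have yN i : i \notin S -> y 0 i = 0.
  move=> iS; rewrite mxE big_pred0 // => b; apply: contraNF iS => /eqP <-; exact: fS_in.
rewrite -eigenvalue_tr; apply/eigenvalueP; exists y; last first.
  have [a va] : exists a, v 0 a != 0.
    apply/existsP; move: vn0; apply: contraR; rewrite negb_exists => /forallP h.
    apply/eqP/rowP => a; rewrite mxE; apply/eqP; move: (h a); by rewrite negbK.
  apply/eqP => /rowP/(_ (fS a)); rewrite yS mxE => /eqP.
  by rewrite mulf_eq0 fmorph_eq0 (gt_eqF (hS _ (fS_in a))) orbF (negbTE va).
apply/rowP => i; rewrite [LHS]mxE [RHS]mxE.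
have -> : \sum_j y 0 j * ((map_mx toC Jm)^T) j i = \sum_j y 0 j * toC (Jm i j).
  by apply: eq_bigr => j _; rewrite !mxE.
case: (boolP (i \in S)) => Hi; last first.
  rewrite yN // mulr0 big1 // => j _; rewrite JmE hN // mul0r addr0.
  case: (eqVneq i j) => [<-|ne]; first by rewrite yN // mul0r.
  by rewrite mul0r rmorph0 mulr0.
have -> : i = fS (enum_rank_in Hi i) by rewrite /fS enum_rankK_in.
set a := enum_rank_in Hi i.
rewrite yS (@sumS _ (fun j => y 0 j * toC (Jm (fS a) j))); last by move=> j /yN ->; rewrite mul0r.
transitivity (toC (w (fS a)) * \sum_b v 0 b * toC (M (fS a) (fS b) * w (fS b))).
  rewrite mulr_sumr; apply: eq_bigr => b _; rewrite yS JmE hg ?fS_in // mulr0 add0r !rmorphM /=; ring.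
by rewrite hc; ring.
Qed.

Lemma core_all :
 (forall z, eigenvalue (map_mx toC Jm) z -> (forall i, i \notin S -> z != toC (g i)) ->
     complex.Im z = 0 /\ complex.Re z <= 0)
 /\ (exists k (A P : 'M[R]_k),
     P^T = P /\
     (forall x : 'cV[R]_k, x != 0 -> 0 < (x^T *m P *m x) 0 0) /\
     (forall x y : 'cV[R]_k, (A *m x)^T *m P *m y = x^T *m P *m (A *m y)) /\
     (forall x : 'cV[R]_k, (x^T *m P *m (A *m x)) 0 0 <= 0) /\
     (forall z, eigenvalue (map_mx toC Jm) z <->
        ((exists2 i, i \notin S & z = toC (g i)) \/ eigenvalue (map_mx toC A) z)))
 /\ ((exists2 r : R, 0 < r & eigenvalue Jm r) <-> (exists i, w i = 0 /\ 0 < g i)).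
Proof.
have sr := @spec_real _ Am Pm Pm_pd Am_sa Am_nsd.
split.
  move=> z /eig_fwd [[i iS ->]|]; last by move=> /sr.
  by move=> /(_ i iS); rewrite eqxx.
split.
  exists #|S|, Am, Pm; split; first exact: Pm_tr.
  split; first exact: Pm_pd. split; first exact: Am_sa. split; first exact: Am_nsd.
  move=> z; split; first exact: eig_fwd.
  by case=> [[i iS ->]|]; [exact: eig_bwd1|exact: eig_bwd2].
split.
  case=> r r0; rewrite -(eigenvalue_map toC) => /eig_fwd [[i iS /fmorph_inj e]|/sr [_]].
    by exists i; split; [exact: hN | rewrite -e].
  by rewrite /= leNgt r0.
case=> i [wi gi]; exists (g i) => //; rewrite -(eigenvalue_map toC); apply: eig_bwd1.
by apply/negP => /hS; rewrite wi ltxx.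
Qed.

End Core.
End C.

Section An.
Variables (R : realType) (m : nat).

Lemma partial1 (f : 'rV[R]_m -> R) j x :
  partial f j x = 'D_1 (fun h : R => f (h *: ej R j + x)) 0.
Proof.
rewrite /partial /derive; set d := (fun h : R => h^-1 *: _).
set d' := (fun h : R => h^-1 *: _).
suff -> : d = d' by [].
apply/funext => h; by rewrite /d /d' /= scale0r add0r addr0 [h%:A](mulr1).
Qed.

Lemma is_derive_bigseq {I : eqType} (r : seq I) (P : pred I) (h : I -> R -> R)
  (dh : I -> R) (x v : R) :
  (forall i, P i -> is_derive x v (h i) (dh i)) ->
  is_derive x v (fun y => \sum_(i <- r | P i) h i y) (\sum_(i <- r | P i) dh i).
Proof.
move=> hd; elim: r => [|a r IH].
  rewrite big_nil; have -> : (fun y => \sum_(i <- [::] | P i) h i y) = cst 0.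
    by apply/funext => y; rewrite big_nil.
  exact: is_derive_cst.
rewrite big_cons; case: ifP => Pa.
  have -> : (fun y => \sum_(i <- a :: r | P i) h i y) =
      h a + (fun y => \sum_(i <- r | P i) h i y).
    by apply/funext => y; rewrite big_cons Pa.
  exact: (is_deriveD (hd a Pa) IH).
have -> : (fun y => \sum_(i <- a :: r | P i) h i y) = (fun y => \sum_(i <- r | P i) h i y).
  by apply/funext => y; rewrite big_cons Pa.
exact: IH.
Qed.

Lemma is_derive_ext2 {V W : normedModType R} {f g : V -> W} {x v df dg} :
  is_derive x v f df -> f =1 g -> df = dg -> is_derive x v g dg.
Proof. by move=> D /funext <- <-. Qed.

Lemma dcoord (w : 'rV[R]_m) j i : is_derive (0:R) 1 (fun h : R => (h *: ej R j + w) 0 i) (ej R j 0 i).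
Proof.
have D := (is_deriveD (is_deriveZ (ej R j 0 i) (is_derive_id (0:R) 1)) (is_derive_cst (w 0 i) (0:R) 1)).
apply: (is_derive_ext2 D).
  by move=> h; rewrite !mxE /= mulrC.
by rewrite addr0 [_%:A]mulr1.
Qed.

Lemma dvsum (w : 'rV[R]_m) j (I : {set 'I_m}) :
  is_derive (0:R) 1 (fun h : R => vsum (h *: ej R j + w) I) (\sum_(i in I) ej R j 0 i).
Proof.
exact: (@is_derive_bigseq _ (index_enum _) (fun i => i \in I)
   (fun i (y : R) => (y *: ej R j + w) 0 i) _ 0 1 (fun i _ => dcoord w j i)).
Qed.

Lemma dln (w : 'rV[R]_m) j (I : {set 'I_m}) : 0 < vsum w I ->
  is_derive (0:R) 1 (fun h : R => ln (vsum (h *: ej R j + w) I))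
     ((vsum w I)^-1 * \sum_(i in I) ej R j 0 i).
Proof.
move=> hp.
have e0 : vsum (0 *: ej R j + w) I = vsum w I by rewrite scale0r add0r.
have Dl : is_derive (vsum (0 *: ej R j + w) I) 1 (@ln R) (vsum w I)^-1.
  by rewrite e0; exact: is_derive1_ln.
exact: (is_derive1_comp Dl (dvsum w j I)).
Qed.

Lemma ejE (j i : 'I_m) : ej R j 0 i = ((j == i)%:R : R).
Proof. by rewrite /ej mxE /= eq_sym. Qed.

Lemma sum_ej (j : 'I_m) : \sum_i ej R j 0 i = 1.
Proof.
rewrite (bigD1 j) //= big1 ?addr0 ?ejE ?eqxx // => i ne.
by rewrite ejE eq_sym (negbTE ne).
Qed.

Lemma sum_ej_in (j : 'I_m) (I : {set 'I_m}) : \sum_(i in I) ej R j 0 i = (j \in I)%:R.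
Proof.
case: (boolP (j \in I)) => jI.
  rewrite (bigD1 j) //= big1 ?addr0 ?ejE ?eqxx // => i /andP [_ ne].
  by rewrite ejE eq_sym (negbTE ne).
by rewrite big1 // => i iI; rewrite ejE; case: eqP => // e; move: jI; rewrite e iI.
Qed.

Lemma dLf (E : {set {set 'I_m}}) (w : 'rV[R]_m) j : (forall I, I \in E -> 0 < vsum w I) ->
  partial (Lf E) j w = -1 + (Nr R E)^-1 * \sum_(I in E) ((j \in I)%:R / vsum w I).
Proof.
move=> hp; rewrite partial1.
have D1 := is_deriveN (@is_derive_bigseq _ (index_enum _) predT (fun i (y:R) => (y *: ej R j + w) 0 i) _ 0 1 (fun i _ => dcoord w j i)).
have D2 := is_deriveZ (Nr R E)^-1 (@is_derive_bigseq _ (index_enum _) (fun I => I \in E) (fun I (y:R) => ln (vsum (y *: ej R j + w) I)) _ 0 1 (fun I hI => dln w j I (hp I hI))).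
have D := is_deriveD D1 D2.
suff D' : is_derive (0:R) 1 (fun h : R => Lf E (h *: ej R j + w))
   (-1 + (Nr R E)^-1 * \sum_(I in E) ((j \in I)%:R / vsum w I)) by rewrite derive_val.
apply: (is_derive_ext2 D) => //.
congr (_ + _); first by congr (- _); exact: sum_ej.
congr (_ * _); apply: eq_bigr => I _; by rewrite sum_ej_in mulrC.
Qed.

Definition gL (E : {set {set 'I_m}}) (w : 'rV[R]_m) (i : 'I_m) : R :=
  -1 + (Nr R E)^-1 * \sum_(I in E) ((i \in I)%:R / vsum w I).
Definition ML (E : {set {set 'I_m}}) (w : 'rV[R]_m) (i j : 'I_m) : R :=
  - ((Nr R E)^-1 * \sum_(I in E) ((i \in I)%:R * (j \in I)%:R / (vsum w I)^+2)).

Lemma dterm (w : 'rV[R]_m) i j (I : {set 'I_m}) : 0 < vsum w I ->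
  is_derive (0:R) 1 (fun y : R => (y *: ej R j + w) 0 i / vsum (y *: ej R j + w) I)
   (w 0 i *: (- (vsum w I)^-2 *: \sum_(k in I) ej R j 0 k) + (vsum w I)^-1 *: ej R j 0 i).
Proof.
move=> hp.
have e0 : vsum (0 *: ej R j + w) I = vsum w I by rewrite scale0r add0r.
have Dv := is_deriveV (x := 0) (f := fun y : R => vsum (y *: ej R j + w) I) (v := 1)
   (t := \sum_(k in I) ej R j 0 k).
have Dv' := Dv ltac:(by rewrite e0 gt_eqF) (dvsum w j I).
have D := is_deriveM (dcoord w j i) Dv'.
apply: (is_derive_ext2 D) => //.
by rewrite /= e0 scale0r add0r.
Qed.

Lemma dFf (E : {set {set 'I_m}}) (w : 'rV[R]_m) i j : (forall I, I \in E -> 0 < vsum w I) ->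
  partial (Ff E i) j w = (i == j)%:R * gL E w i + w 0 i * ML E w i j.
Proof.
move=> hp; rewrite partial1.
have D1 := is_deriveN (dcoord w j i).
have D2 := is_deriveZ (Nr R E)^-1 (@is_derive_bigseq _ (index_enum _)
  (fun I => (I \in E) && (i \in I))
  (fun I (y:R) => (y *: ej R j + w) 0 i / vsum (y *: ej R j + w) I) _ 0 1
  (fun I hI => dterm w i j I (hp I (proj1 (andP hI))))).
have D := is_deriveD D1 D2.
suff D' : is_derive (0:R) 1 (fun h : R => Ff E i (h *: ej R j + w))
   ((i == j)%:R * gL E w i + w 0 i * ML E w i j) by rewrite derive_val.
apply: (is_derive_ext2 D) => //.
rewrite /gL /ML ejE.
have -> : \sum_(I in E | i \in I)
     (w 0 i *: (- (vsum w I)^-2 *: \sum_(k in I) ej R j 0 k) + (vsum w I)^-1 *: (j == i)%:R)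
   = \sum_(I in E) ((i == j)%:R * ((i \in I)%:R / vsum w I)
        - w 0 i * ((i \in I)%:R * (j \in I)%:R / (vsum w I)^+2)).
  rewrite big_mkcondr /=; apply: eq_bigr => I _; rewrite sum_ej_in eq_sym.
  case: (i \in I); rewrite /=; last by ring.
  rewrite /GRing.scale /=; ring.
rewrite big_split /= sumrN -!mulr_sumr.
rewrite eq_sym /GRing.scale /=; ring.
Qed.

Lemma ML_sym (E : {set {set 'I_m}}) (w : 'rV[R]_m) i j : ML E w i j = ML E w j i.
Proof.
rewrite /ML; congr (- (_ * _)); apply: eq_bigr => I _.
by rewrite [(i \in I)%:R * _]mulrC.
Qed.

Lemma ML_nsd (E : {set {set 'I_m}}) (w : 'rV[R]_m) k (f : 'I_k -> 'I_m) (x : 'I_k -> R) :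
  \sum_a \sum_b x a * ML E w (f a) (f b) * x b <= 0.
Proof.
pose c I := - ((Nr R E)^-1 * ((vsum w I)^+2)^-1).
pose y (I : {set 'I_m}) (a : 'I_k) := x a * (f a \in I)%:R.
have step a b : x a * ML E w (f a) (f b) * x b = \sum_(I in E) c I * (y I a * y I b).
  rewrite /ML mulr_sumr -sumrN mulr_sumr mulr_suml; apply: eq_bigr => I _.
  rewrite /c /y; ring.
under eq_bigr do under eq_bigr do rewrite step.
under eq_bigr do rewrite exchange_big.
rewrite exchange_big /=.
apply: sumr_le0 => I _.
have -> : \sum_a \sum_b c I * (y I a * y I b) = c I * (\sum_a y I a)^+2.
  rewrite expr2 mulr_suml mulr_sumr; apply: eq_bigr => a _.
  rewrite !mulr_sumr; apply: eq_bigr => b _; ring.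
rewrite /c mulNr oppr_le0; apply: mulr_ge0; last exact: sqr_ge0.
by apply: mulr_ge0; rewrite invr_ge0 ?ler0n ?sqr_ge0.
Qed.

End An.

Theorem mainTheorem7 (R : realType) (m : nat) (E : {set {set 'I_m}}) (c : R)
  (hE : hypergraph E) (hc0 : 0 < c) (hc1 : c < (Nr R E)^-1)
  (S : {set 'I_m}) (w : 'rV[R]_m) (hw : Lambda_S E c S w) :
  (* eigenvalues other than dL/dv_i(w), i notin S, are real and nonpositive *)
  (forall z : R[i], ceigen (JF E w) z ->
     (forall i, i \notin S -> z != (partial (Lf E) i w)%:C%C) ->
     complex.Im z = 0 /\ complex.Re z <= 0)
  /\
  (* spectrum = {dL/dv_i(w) : i notin S} U spectrum of a matrix A that is
     self-adjoint and negative semidefinite for the inner product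
     <x, y> = x^T P y, P symmetric positive definite *)
  (exists (k : nat) (A P : 'M[R]_k),
     P^T = P /\
     (forall x : 'cV[R]_k, x != 0 -> 0 < (x^T *m P *m x) 0 0) /\
     (forall x y : 'cV[R]_k, (A *m x)^T *m P *m y = x^T *m P *m (A *m y)) /\
     (forall x : 'cV[R]_k, (x^T *m P *m (A *m x)) 0 0 <= 0) /\
     (forall z : R[i], ceigen (JF E w) z <->
        ((exists2 i, i \notin S & z = (partial (Lf E) i w)%:C%C) \/ ceigen A z)))
  /\
  (* real positive eigenvalue criterion *)
  ((exists2 r : R, 0 < r & eigenvalue (JF E w) r) <->
   (exists i : 'I_m, w 0 i = 0 /\ 0 < partial (Lf E) i w)).
Proof.
case: hw => [[[w0 [_ hc]] hwS] hgS].
have hp : forall I, I \in E -> 0 < vsum w I.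
  by move=> I hI; apply: (lt_le_trans hc0 (hc I hI)).
pose g := @gL R m E w. pose wf := fun i => w 0 i. pose M := @ML R m E w.
have hN i : i \notin S -> wf i = 0 by move=> h; apply/(proj2 (hwS i)).
have hS i : i \in S -> 0 < wf i.
  move=> iS; rewrite lt_def w0 andbT; apply/eqP => /(proj1 (hwS i)); by rewrite iS.
have pL i : partial (Lf E) i w = g i by exact: dLf.
have hg i : i \in S -> g i = 0 by move=> iS; rewrite -pL hgS.


have JFe : JF E w = Jm R m g wf M by apply/matrixP => i j; rewrite !mxE dFf.
have [H1 [H2 H3]] := @core_all R m g wf M S hS hN hg (@ML_sym R m E w) (@ML_nsd R m E w).
rewrite /ceigen JFe.
split.
  move=> z ez hz; apply: (H1 z ez) => i iS; rewrite -pL; exact: hz i iS.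
split.
  case: H2 => k [A [P [hP1 [hP2 [hP3 [hP4 hP5]]]]]].
  exists k, A, P; split => //; split => //; split => //; split => //.
  move=> z; rewrite hP5; split; case=> [[i iS ->]|h].
  - by left; exists i => //; rewrite pL.
  - by right.
  - by left; exists i => //; rewrite pL.
  - by right.
split => [/H3 [i [h1 h2]] | [i [h1 h2]]].
  by exists i; rewrite pL.
by apply/H3; exists i; rewrite -pL.
Qed.
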